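(* Let $\mathcal{D}$ be a distribution on $\mathbb{R}^d\times\mathbb{R}$ with $\|\mathbf{x}\|_2\le1$ and $|y|\le B$ almost surely. The GAERR algorithm (with any sampling distribution $(q_1,\dots,q_d)$ and budget $k$) generates gradient estimates satisfying, for all $t$, $$\mathbb{E}_{\mathcal{D},A}\big[\|\widetilde{\mathbf{g}}_t\|_2^2\big]\le 4B^2\Big(\frac1k\mathbb{E}_{\mathcal{D},A}\big[\|\widetilde{\mathbf{x}}_{t,r}\|_2^2\big]+1\Big).$$
   Context: Algorithm GAERR (parameters $B,\eta>0$, probabilities $q_i$ summing to $1$, integer budget $k>0$; i.i.d. examples $(\mathbf{x}_t,y_t)\sim\mathcal{D}$): initialize $\mathbf{w}_1\ne0$, $\|\mathbf{w}_1\|_2\le B$. For each $t$: for $r=1..k$ draw $i_{t,r}$ with probability $q_{i_{t,r}}$ and set $\widetilde{\mathbf{x}}_{t,r}=\frac{1}{q_{i_{t,r}}}\mathbf{x}_t[i_{t,r}]\mathbf{e}_{i_{t,r}}$ (the $\widetilde{\mathbf{x}}_{t,r}$, $r=1..k$, are identically distributed); $\widetilde{\mathbf{x}}_t=\frac1k\sum_r\widetilde{\mathbf{x}}_{t,r}$; draw $j_t$ with probability $p_j=w_{t,j}^2/\|\mathbf{w}_t\|_2^2$ and set $\widetilde\phi_t=\frac{w_{t,j_t}}{p_{j_t}}\mathbf{x}_t[j_t]-y_t$; $\widetilde{\mathbf{g}}_t=\widetilde\phi_t\widetilde{\mathbf{x}}_t$; $\mathbf{v}_t=\mathbf{w}_t-\eta\widetilde{\mathbf{g}}_t$;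 $\mathbf{w}_{t+1}=\mathbf{v}_tB/\max\{\|\mathbf{v}_t\|_2,B\}$. All draws independent. $\mathbb{E}_{\mathcal{D},A}$ is expectation over examples and algorithm randomness. *)

(* Defs.v *)
From HB Require Import structures.
From mathcomp Require Import all_boot all_order all_algebra.
From mathcomp Require Import all_classical all_reals all_analysis.
Set Implicit Arguments. Unset Strict Implicit. Unset Printing Implicit Defensive.
Import Order.TTheory GRing.Theory Num.Theory.
Local Open Scope ring_scope.

Section GAERR.
Variables (R : realType) (d k : nat).

Notation vec := 'rV[R]_d.

Definition sqn (v : vec) : R := \sum_(i < d) v 0 i ^+ 2.
Definition norm2 (v : vec) : R := Num.sqrt (sqn v).

(* probability of drawing coordinate j : w_j^2/||w||^2
   (convention: uniform if w = 0, a case the paper never considers) *)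
Definition pj (w : vec) (j : 'I_d) : R :=
  if sqn w == 0 then d%:R^-1 else w 0 j ^+ 2 / sqn w.

Definition xtil_r (q : 'I_d -> R) (x : vec) (i : 'I_d) : vec :=
  (x 0 i / q i) *: delta_mx 0 i.

Definition xtil (q : 'I_d -> R) (x : vec) (ii : {ffun 'I_k -> 'I_d}) : vec :=
  k%:R^-1 *: \sum_(r < k) xtil_r q x (ii r).

Definition phitil (w x : vec) (y : R) (j : 'I_d) : R :=
  w 0 j / pj w j * x 0 j - y.

Definition gtil (q : 'I_d -> R) (w x : vec) (y : R)
  (ii : {ffun 'I_k -> 'I_d}) (j : 'I_d) : vec :=
  phitil w x y j *: xtil q x ii.

Definition update (B eta : R) (q : 'I_d -> R) (w x : vec) (y : R)
  (ii : {ffun 'I_k -> 'I_d}) (j : 'I_d) : vec :=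
  let v := w - eta *: gtil q w x y ii j in
  (B / Num.max (norm2 v) B) *: v.

Definition qprod (q : 'I_d -> R) (ii : {ffun 'I_k -> 'I_d}) : R :=
  \prod_(r < k) q (ii r).

Local Open Scope ereal_scope.

(* Expectation over one round of fresh randomness (example (x,y) ~ D,
   given as the law of (X,Y) on the probability space P, the k index
   draws i_{t,r} ~ q and the draw j_t ~ p(w)), all independent,
   for the current iterate w. *)
Definition step_E (d0 : measure_display) (T : measurableType d0)
  (P : probability T R) (X : T -> vec) (Y : T -> R) (q : 'I_d -> R) (w : vec)
  (F : vec -> R -> {ffun 'I_k -> 'I_d} -> 'I_d -> \bar R) : \bar R :=
  \int[P]_om (\sum_(ii : {ffun 'I_k -> 'I_d}) \sum_(j < d)
      ((qprod q ii * pj w j)%:E * F (X om) (Y om) ii j)).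

(* EW n h = E_{D,A}[ h(w_{n+1}) ]  (iterates indexed from w_1 = w1). *)
Fixpoint EW (d0 : measure_display) (T : measurableType d0)
  (P : probability T R) (X : T -> vec) (Y : T -> R) (B eta : R)
  (q : 'I_d -> R) (w1 : vec) (n : nat) (h : vec -> \bar R) : \bar R :=
  match n with
  | 0%N => h w1
  | n'.+1 => EW P X Y B eta q w1 n'
      (fun w => step_E P X Y q w (fun x y ii j => h (update B eta q w x y ii j)))
  end.

Definition E_sq_g (d0 : measure_display) (T : measurableType d0)
  (P : probability T R) (X : T -> vec) (Y : T -> R) (B eta : R)
  (q : 'I_d -> R) (w1 : vec) (n : nat) : \bar R :=
  EW P X Y B eta q w1 n
    (fun w => step_E P X Y q w (fun x y ii j => (norm2 (gtil q w x y ii j) ^+ 2)%:E)).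

(* E_{D,A}[ ||x~_{t,r}||_2^2 ]  (the same for every t and r) *)
Definition E_sq_xr (d0 : measure_display) (T : measurableType d0)
  (P : probability T R) (X : T -> vec) (q : 'I_d -> R) : \bar R :=
  \int[P]_om (\sum_(i < d) (q i * norm2 (xtil_r q (X om) i) ^+ 2)%:E).

End GAERR.

(* Main.v *)
Require Import Defs.
From HB Require Import structures.
From mathcomp Require Import all_boot all_order all_algebra.
From mathcomp Require Import all_classical all_reals all_analysis.
From mathcomp Require Import ring lra measurable_realfun.
Import Order.TTheory GRing.Theory Num.Theory.
Local Open Scope ring_scope.

Section RealPart.
Variables (R : realType) (d k : nat).
Implicit Types (v w x : 'rV[R]_d).

Lemma sqn_ge0 v : 0 <= sqn v.
Proof. by apply: sumr_ge0 => i _; exact: sqr_ge0. Qed.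

Lemma norm2_sq v : norm2 v ^+ 2 = sqn v.
Proof. by rewrite /norm2 sqr_sqrtr // sqn_ge0. Qed.

Lemma sqn_scale (c : R) v : sqn (c *: v) = c ^+ 2 * sqn v.
Proof. by rewrite /sqn mulr_sumr; apply: eq_bigr => i _; rewrite mxE exprMn. Qed.

Lemma sqn_delta (i : 'I_d) : sqn (delta_mx 0 i : 'rV[R]_d) = 1.
Proof.
rewrite /sqn (bigD1 i) //= big1 ?addr0; first by rewrite mxE !eqxx expr1n.
by move=> j ji; rewrite mxE eqxx /= (negbTE ji) expr0n.
Qed.

Lemma sqn_xtil_r (q : 'I_d -> R) x i : sqn (xtil_r q x i) = (x 0 i / q i) ^+ 2.
Proof. by rewrite /xtil_r sqn_scale sqn_delta mulr1. Qed.

Lemma pj_ge0 w j : 0 <= pj w j.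
Proof.
rewrite /pj; case: ifP => _; first by rewrite invr_ge0.
by apply: divr_ge0; [exact: sqr_ge0|exact: sqn_ge0].
Qed.

Lemma sum_pj_le1 w : \sum_(j < d) pj w j <= 1.
Proof.
rewrite /pj; have [s0|s0] := eqVneq (sqn w) 0.
  rewrite sumr_const card_ord; case: (d) => [|n]; first by rewrite mulr0n.
  by rewrite -[_ *+ n.+1]mulr_natr mulVf // pnatr_eq0.
by rewrite -mulr_suml mulfV.
Qed.

Lemma qprod_ge0 (q : 'I_d -> R) (ii : {ffun 'I_k -> 'I_d}) :
  (forall i, 0 <= q i) -> 0 <= qprod q ii.
Proof. by move=> q0; apply: prodr_ge0 => r _. Qed.

Lemma phi_bound w x (y B : R) : norm2 w <= B -> norm2 x <= 1 -> `|y| <= B ->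
  \sum_(j < d) pj w j * phitil w x y j ^+ 2 <= 4 * B ^+ 2.
Proof.
move=> hw hx hy.
have B0 : 0 <= B by apply: le_trans hw; exact: sqrtr_ge0.
have sB : sqn w <= B ^+ 2.
  by rewrite -norm2_sq lerXn2r // ?nnegrE ?sqrtr_ge0.
have sx : sqn x <= 1.
  by rewrite -norm2_sq -(expr1n _ 2) lerXn2r // ?nnegrE ?sqrtr_ge0.
have yB : y ^+ 2 <= B ^+ 2.
  by rewrite -real_normK ?num_real // lerXn2r // ?nnegrE.
have term j : pj w j * phitil w x y j ^+ 2 <=
    2 * (sqn w * x 0 j ^+ 2) + 2 * (y ^+ 2 * pj w j).
  rewrite /phitil; set a := w 0 j / pj w j * x 0 j.
  have pa : pj w j * a ^+ 2 <= sqn w * x 0 j ^+ 2.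
    have [wj0|wj0] := eqVneq (w 0 j) 0.
      rewrite /a wj0 !mul0r expr0n mulr0.
      by apply: mulr_ge0; [exact: sqn_ge0|exact: sqr_ge0].
    have sn0 : sqn w != 0.
      apply/eqP => /eqP; rewrite /sqn psumr_eq0; last by move=> i _; exact: sqr_ge0.
      by move=> /allP /(_ j (mem_index_enum _)) /=; rewrite sqrf_eq0 (negbTE wj0).
    have pne : pj w j != 0.
      by rewrite /pj (negbTE sn0) mulf_neq0 ?invr_eq0 // sqrf_eq0.
    rewrite /a exprMn mulrA; apply: ler_wpM2r; first exact: sqr_ge0.
    rewrite /pj (negbTE sn0) le_eqVlt; apply/orP; left; apply/eqP.
    field; rewrite ?sn0 ?wj0 //.
  have p0 := pj_ge0 w j.
  have e : pj w j * (a - y) ^+ 2 <= 2 * (pj w j * a ^+ 2) + 2 * (y ^+ 2 * pj w j).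
    have : 0 <= pj w j * (a + y) ^+ 2 by apply: mulr_ge0 => //; exact: sqr_ge0.
    nra.
  by apply: (le_trans e); rewrite lerD2r ler_wpM2l.
apply: le_trans (ler_sum _ (fun j _ => term j)) _.
rewrite big_split /= -!mulr_sumr.
have h1 : y ^+ 2 * \sum_(i < d) pj w i <= B ^+ 2.
  apply: le_trans yB; rewrite -[leRHS]mulr1.
  by apply: ler_wpM2l; [exact: sqr_ge0|exact: sum_pj_le1].
have h2 : sqn w * \sum_(i < d) x 0 i ^+ 2 <= B ^+ 2.
  rewrite -/(sqn x) -[B ^+ 2]mulr1; apply: ler_pM => //; first exact: sqn_ge0.
  exact: sqn_ge0.
lra.
Qed.

End RealPart.

Section RealPart2.
Variables (R : realType) (d k : nat).

Lemma mulr_natb (c : R) (b : bool) : c * b%:R = if b then c else 0.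
Proof. by case: b => /=; [exact: mulr1|exact: mulr0]. Qed.

Lemma E2 (q : 'I_d -> R) (f g : 'I_d -> R) (r s : 'I_k) : \sum_(i < d) q i = 1 ->
  \sum_(ii : {ffun 'I_k -> 'I_d}) qprod q ii * (f (ii r) * g (ii s)) =
  if r == s then \sum_(i < d) q i * (f i * g i)
  else (\sum_(i < d) q i * f i) * (\sum_(i < d) q i * g i).
Proof.
move=> q1.
pose F (r' : 'I_k) (i : 'I_d) :=
  q i * ((if r' == r then f i else 1) * (if r' == s then g i else 1)).
have e ii : qprod q ii * (f (ii r) * g (ii s)) = \prod_(r' < k) F r' (ii r').
  rewrite /F big_split /= big_split /=.
  rewrite -(big_mkcond (fun r' => r' == r)) -(big_mkcond (fun r' => r' == s)).
  by rewrite !big_pred1_eq.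
under eq_bigr do rewrite e.
rewrite -(bigA_distr_bigA F).
have [rs|nrs] := eqVneq r s.
  subst s.
  rewrite (bigD1 r) //= [X in _ * X]big1 ?mulr1 => [|r' nr].
    by apply: eq_bigr => i _; rewrite /F eqxx.
  rewrite /F (negbTE nr); under eq_bigr do rewrite !mulr1; exact: q1.
rewrite (bigD1 r) //= (bigD1 s) /=; last by rewrite eq_sym.
rewrite [X in _ * (_ * X)]big1 ?mulr1 => [|r' /andP[nr ns]].
  congr (_ * _); apply: eq_bigr => i _; rewrite /F ?eqxx ?(negbTE nrs).
    by rewrite mulr1.
  by rewrite eq_sym (negbTE nrs) mul1r.
rewrite /F (negbTE nr) (negbTE ns); under eq_bigr do rewrite !mulr1; exact: q1.
Qed.

Lemma xtil_entry (q : 'I_d -> R) (x : 'rV[R]_d) (ii : {ffun 'I_k -> 'I_d}) l :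
  xtil q x ii 0 l = k%:R^-1 * \sum_(r < k) (x 0 (ii r) / q (ii r)) * (ii r == l)%:R.
Proof.
rewrite /xtil mxE summxE; congr (_ * _); apply: eq_bigr => r _.
by rewrite /xtil_r !mxE /= eq_sym.
Qed.

Lemma xtil_bound (q : 'I_d -> R) (x : 'rV[R]_d) :
  (forall i, 0 <= q i) -> \sum_(i < d) q i = 1 -> sqn x <= 1 -> (0 < k)%N ->
  \sum_(ii : {ffun 'I_k -> 'I_d}) qprod q ii * sqn (xtil q x ii) <=
  k%:R^-1 * \sum_(i < d) q i * sqn (xtil_r q x i) + 1.
Proof.
move=> q0 q1 sx k0.
pose c i := x 0 i / q i.
pose f (l i : 'I_d) := if i == l then c i else 0.
have step1 ii : qprod q ii * sqn (xtil q x ii) =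
    \sum_(l < d) \sum_(r < k) \sum_(s < k)
       k%:R^-1 ^+ 2 * (qprod q ii * (f l (ii r) * f l (ii s))).
  rewrite /sqn mulr_sumr; apply: eq_bigr => l _; rewrite xtil_entry.
  under eq_bigr do rewrite mulr_natb.
  rewrite exprMn expr2 [X in _ * (_ * X)]big_distrlr /= !mulr_sumr.
  apply: eq_bigr => r _; rewrite !mulr_sumr; apply: eq_bigr => s _.
  by rewrite /f /c mulrCA.
under eq_bigr do rewrite step1.
rewrite exchange_big /=.
under eq_bigr do rewrite exchange_big /=.
under eq_bigr do under eq_bigr do rewrite exchange_big /=.
have inner l r s : \sum_(ii : {ffun 'I_k -> 'I_d}) qprod q ii * (f l (ii r) * f l (ii s))
    <= (r == s)%:R * (q l * c l ^+ 2) + x 0 l ^+ 2.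
  have fl (g : 'I_d -> R) : \sum_(i < d) (if i == l then g i else 0) = g l.
    by rewrite -big_mkcond big_pred1_eq.
  rewrite E2 //; have [rs|nrs] := eqVneq r s.
    rewrite mul1r.
    have -> : \sum_(i < d) q i * (f l i * f l i) = q l * c l ^+ 2.
      rewrite -(fl (fun i => q i * c i ^+ 2)); apply: eq_bigr => i _.
      by rewrite /f; case: (i == l); rewrite ?expr2 // mul0r mulr0.
    by rewrite -[leLHS]addr0 lerD2l sqr_ge0.
  rewrite mul0r add0r.
  have -> : \sum_(i < d) q i * f l i = q l * c l.
    rewrite -(fl (fun i => q i * c i)); apply: eq_bigr => i _.
    by rewrite /f; case: (i == l); rewrite // mulr0.
  rewrite expr2 -expr2 /c; have [ql0|ql0] := eqVneq (q l) 0.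
    by rewrite ql0 mul0r expr0n sqr_ge0.
  by rewrite mulrC divfK.
have bnd l : \sum_(r < k) \sum_(s < k) \sum_(ii : {ffun 'I_k -> 'I_d})
      k%:R^-1 ^+ 2 * (qprod q ii * (f l (ii r) * f l (ii s))) <=
    k%:R^-1 * (q l * c l ^+ 2) + x 0 l ^+ 2.
  have kk : k%:R != 0 :> R by rewrite pnatr_eq0 -lt0n.
  apply: (@le_trans _ _ (\sum_(r < k) \sum_(s < k)
      k%:R^-1 ^+ 2 * ((r == s)%:R * (q l * c l ^+ 2) + x 0 l ^+ 2))).
    apply: ler_sum => r _; apply: ler_sum => s _; rewrite -mulr_sumr.
    by apply: ler_wpM2l; [exact: sqr_ge0|exact: inner].
  under eq_bigr do rewrite -mulr_sumr big_split /= -mulr_suml.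
  have e1 r : \sum_(s < k) (r == s)%:R = 1 :> R.
    rewrite (bigD1 r) //= big1 ?addr0 ?eqxx // => s sr.
    by rewrite eq_sym (negbTE sr).
  under eq_bigr do rewrite e1 mul1r sumr_const card_ord.
  rewrite -mulr_sumr big_split /= !sumr_const card_ord.
  rewrite le_eqVlt; apply/orP; left; apply/eqP.
  rewrite -(mulr_natr (x 0 l ^+ 2 *+ k)) -(mulr_natr (x 0 l ^+ 2)).
  rewrite -(mulr_natr (q l * c l ^+ 2)); field; exact: kk.
apply: le_trans (ler_sum _ (fun l _ => bnd l)) _.
rewrite big_split /= -mulr_sumr; apply: lerD; last exact: sx.
rewrite le_eqVlt; apply/orP; left; apply/eqP; congr (_ * _).
by apply: eq_bigr => i _; rewrite sqn_xtil_r.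
Qed.

Lemma pointwise (q : 'I_d -> R) (w x : 'rV[R]_d) (y B : R) :
  (forall i, 0 <= q i) -> \sum_(i < d) q i = 1 -> (0 < k)%N ->
  norm2 w <= B -> norm2 x <= 1 -> `|y| <= B ->
  \sum_(ii : {ffun 'I_k -> 'I_d}) \sum_(j < d)
     qprod q ii * pj w j * norm2 (gtil q w x y ii j) ^+ 2 <=
  4 * B ^+ 2 * (k%:R^-1 * \sum_(i < d) q i * sqn (xtil_r q x i) + 1).
Proof.
move=> q0 q1 k0 hw hx hy.
have e ii j : qprod q ii * pj w j * norm2 (gtil q w x y ii j) ^+ 2 =
    (qprod q ii * sqn (xtil q x ii)) * (pj w j * phitil w x y j ^+ 2).
  by rewrite norm2_sq /gtil sqn_scale; ring.
under eq_bigr do under eq_bigr do rewrite e.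
under eq_bigr do rewrite -mulr_sumr.
apply: (@le_trans _ _ (\sum_(ii : {ffun 'I_k -> 'I_d})
    qprod q ii * sqn (xtil q x ii) * (4 * B ^+ 2))).
  apply: ler_sum => ii _; apply: ler_wpM2l; last exact: phi_bound.
  by apply: mulr_ge0; [exact: qprod_ge0|exact: sqn_ge0].
rewrite -mulr_suml mulrC; apply: ler_wpM2l; first by rewrite mulr_ge0 // sqr_ge0.
apply: xtil_bound => //.
by rewrite -norm2_sq -(expr1n _ 2) lerXn2r // ?nnegrE ?sqrtr_ge0.
Qed.

End RealPart2.


Section Meas.
Variables (R : realType) (d k : nat) (d0 : measure_display) (T : measurableType d0)
  (P : probability T R) (X : T -> 'rV[R]_d) (Y : T -> R).
Local Open Scope ereal_scope.

Lemma int_mono (f g : T -> \bar R) : (forall x, 0 <= f x) -> (forall x, f x <= g x) ->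
  \int[P]_x f x <= \int[P]_x g x.
Proof.
move=> f0 fg; have g0 x : 0 <= g x by apply: le_trans (f0 x) (fg x).
rewrite (ge0_integralTE P f0) (ge0_integralTE P g0) /=.
apply: ereal_sup_le => _ [h hf <-]; exists h => //= x; exact: le_trans (hf x) (fg x).
Qed.

Lemma sum_qprod (q : 'I_d -> R) : (\sum_(i < d) q i = 1)%R ->
  (\sum_(ii : {ffun 'I_k -> 'I_d}) qprod q ii = 1)%R.
Proof.
move=> q1; rewrite /qprod -(bigA_distr_bigA (fun (_ : 'I_k) (i : 'I_d) => q i)) /=.
by rewrite big1 // => r _; exact: q1.
Qed.

Lemma step_bound (q : 'I_d -> R) (w : 'rV[R]_d)
  (F : 'rV[R]_d -> R -> {ffun 'I_k -> 'I_d} -> 'I_d -> \bar R) (C : \bar R) :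
  (forall i, 0 <= q i)%R -> (\sum_(i < d) q i = 1)%R -> 0 <= C ->
  (forall x y ii j, 0 <= F x y ii j /\ F x y ii j <= C) ->
  0 <= step_E P X Y q w F /\ step_E P X Y q w F <= C.
Proof.
move=> q0 q1 C0 FC.
have w0 ii j : (0 <= qprod q ii * pj w j)%R by rewrite mulr_ge0 // ?qprod_ge0 // pj_ge0.
have t0 om : 0 <= \sum_(ii : {ffun 'I_k -> 'I_d}) \sum_(j < d)
    ((qprod q ii * pj w j)%:E * F (X om) (Y om) ii j).
  apply: sume_ge0 => ii _; apply: sume_ge0 => j _; apply: mule_ge0.
    by rewrite lee_fin.
  by case: (FC (X om) (Y om) ii j).
split; first exact: integral_ge0.
apply: le_trans (@int_mono _ (cst C) t0 _) _; last first.
  have h1 : (P : {measure set T -> \bar R}) setT = 1 := probability_setT P.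
  by rewrite integral_cst // h1 mule1.
move=> om /=.
apply: (@le_trans _ _ (\sum_(ii : {ffun 'I_k -> 'I_d}) \sum_(j < d)
    ((qprod q ii * pj w j)%:E * C))).
  apply: lee_sum => ii _; apply: lee_sum => j _; apply: lee_pmul => //.
  - by rewrite lee_fin.
  - by case: (FC (X om) (Y om) ii j).
  - by case: (FC (X om) (Y om) ii j).
have e ii : \sum_(j < d) ((qprod q ii * pj w j)%:E * C) =
    (\sum_(j < d) (qprod q ii * pj w j))%:E * C.
  by rewrite -sumEFin ge0_sume_distrl // => j _; rewrite lee_fin.
under eq_bigr do rewrite e.
rewrite -ge0_sume_distrl ?sumEFin; last first.
  by move=> ii _; rewrite lee_fin sumr_ge0.
rewrite -[leRHS]mul1e; apply: lee_pmul => //.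
  by rewrite lee_fin sumr_ge0 // => ii _; rewrite sumr_ge0.
rewrite lee_fin -big_distrlr /= sum_qprod // mul1r; exact: sum_pj_le1.
Qed.

Lemma norm2_scale (c : R) (v : 'rV[R]_d) : norm2 (c *: v) = (`|c| * norm2 v)%R.
Proof. by rewrite /norm2 sqn_scale sqrtrM ?sqr_ge0 // sqrtr_sqr. Qed.

Lemma norm2_update (B eta : R) q w x y (ii : {ffun 'I_k -> 'I_d}) j : (0 < B)%R ->
  (norm2 (update B eta q w x y ii j) <= B)%R.
Proof.
move=> B0; rewrite /update; set v := (w - _)%R.
have M0 : (0 < Num.max (norm2 v) B)%R by rewrite lt_max B0 orbT.
rewrite norm2_scale ger0_norm ?divr_ge0 ?(ltW B0) ?(ltW M0) //.
rewrite mulrAC ler_pdivrMr // ler_wpM2l ?(ltW B0) //.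
by rewrite le_max lexx.
Qed.

Lemma EW_bound (B eta : R) (q : 'I_d -> R) (w1 : 'rV[R]_d) (C : \bar R) :
  (0 < B)%R -> (forall i, 0 <= q i)%R -> (\sum_(i < d) q i = 1)%R -> 0 <= C ->
  (norm2 w1 <= B)%R ->
  forall n (h : 'rV[R]_d -> \bar R), (forall w, 0 <= h w) ->
  (forall w, (norm2 w <= B)%R -> h w <= C) ->
  EW k P X Y B eta q w1 n h <= C.
Proof.
move=> B0 q0 q1 C0 hw1 n; elim: n => [|n IH] h h0 hC /=; first exact: hC.
apply: IH => w.
  by case: (@step_bound q w (fun x y ii j => h (update B eta q w x y ii j)) C q0 q1 C0
    (fun x y ii j => conj (h0 _) (hC _ (norm2_update _ _ _ _ _ _ _ _ B0)))).
move=> _.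
by case: (@step_bound q w (fun x y ii j => h (update B eta q w x y ii j)) C q0 q1 C0
    (fun x y ii j => conj (h0 _) (hC _ (norm2_update _ _ _ _ _ _ _ _ B0)))).
Qed.

Lemma base (B : R) (q : 'I_d -> R) (w : 'rV[R]_d) :
  (forall i : 'I_d, measurable_fun setT (fun om => X om 0%R i)) ->
  {ae P, forall om, norm2 (X om) <= 1 /\ `|Y om| <= B}%R ->
  (0 < B)%R -> (forall i, 0 <= q i)%R -> (\sum_(i < d) q i = 1)%R -> (0 < k)%N ->
  (norm2 w <= B)%R ->
  step_E P X Y q w (fun x y (ii : {ffun 'I_k -> 'I_d}) j => (norm2 (gtil q w x y ii j) ^+ 2)%:E) <=
  (4 * B ^+ 2)%:E * ((k%:R^-1)%:E * E_sq_xr P X q + 1).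
Proof.
move=> mX hae B0 q0 q1 k0 hw.
have h1 : (P : {measure set T -> \bar R}) setT = 1 := probability_setT P.
pose G om := (\sum_(i < d) q i * sqn (xtil_r q (X om) i))%R.
have G0 om : (0 <= G om)%R by apply: sumr_ge0 => i _; rewrite mulr_ge0 ?sqn_ge0.
have mG : measurable_fun setT G.
  rewrite /G; apply: measurable_sum => i /=.
  have -> : (fun om => q i * sqn (xtil_r q (X om) i))%R =
      (fun om => q i * ((X om 0%R i / q i) * (X om 0%R i / q i)))%R.
    by apply/funext => om; rewrite sqn_xtil_r expr2.
  apply: measurable_realfun.measurable_funM; first exact: measurable_cst.
  by apply: measurable_realfun.measurable_funM; apply: measurable_realfun.measurable_funM => //; exact: measurable_cst.
have hE : E_sq_xr P X q = \int[P]_om (G om)%:E.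
  rewrite /E_sq_xr; apply: eq_integral => om _; rewrite sumEFin; congr EFin.
  by apply: eq_bigr => i _; rewrite norm2_sq.
case: hae => N [mN PN0 sub].
pose rho om := (4 * B ^+ 2 * (k%:R^-1 * G om + 1))%R.
have rho0 om : (0 <= rho om)%R.
  apply: mulr_ge0; first by rewrite mulr_ge0 // sqr_ge0.
  by rewrite addr_ge0 // mulr_ge0.
pose rho' om := (rho om)%:E + +oo * (\1_N om)%:E.
have w0 ii j : (0 <= qprod q ii * pj w j)%R by rewrite mulr_ge0 // ?qprod_ge0 // pj_ge0.
have t0 om : 0 <= \sum_(ii : {ffun 'I_k -> 'I_d}) \sum_(j < d)
    ((qprod q ii * pj w j)%:E * (norm2 (gtil q w (X om) (Y om) ii j) ^+ 2)%:E).
  apply: sume_ge0 => ii _; apply: sume_ge0 => j _; apply: mule_ge0.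
    by rewrite lee_fin.
  by rewrite lee_fin sqr_ge0.
apply: le_trans (@int_mono _ rho' t0 _) _.
  move=> om; case: (pselect (N om)) => Nom.
    rewrite /rho' indicE mem_set // mule1 addey //; exact: leey.
  have [hx hy] : (norm2 (X om) <= 1 /\ `|Y om| <= B)%R.
    case: (pselect (norm2 (X om) <= 1 /\ `|Y om| <= B)%R) => // nH.
    by exfalso; apply: Nom; apply: sub.
  rewrite /rho' indicE memNset // mule0 adde0.
  under eq_bigr do under eq_bigr do rewrite -EFinM.
  under eq_bigr do rewrite sumEFin.
  rewrite sumEFin lee_fin; exact: pointwise.
have mind : measurable_fun setT (fun om : T => ((\1_N om : R))%:E).
  by apply/measurable_EFinP; exact: measurable_indic.
have mrho : measurable_fun setT (fun om => (rho om)%:E).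
  apply/measurable_EFinP; rewrite /rho; apply: measurable_realfun.measurable_funM; first exact: measurable_cst.
  apply: measurable_realfun.measurable_funD; last exact: measurable_cst.
  by apply: measurable_realfun.measurable_funM => //; exact: measurable_cst.
have nr x : setT x -> 0 <= (rho x)%:E by move=> _; rewrite lee_fin.
have mo : measurable_fun setT (fun x => +oo * (\1_N x : R)%:E) := measurable_funeM _ mind.
have no x : setT x -> 0 <= +oo * (\1_N x : R)%:E.
  by move=> _; apply: mule_ge0 => //; rewrite lee_fin indicE.
rewrite (ge0_integralD P measurableT nr mrho no mo).
have ni x : setT x -> 0 <= (\1_N x : R)%:E by move=> _; rewrite lee_fin indicE.
rewrite (ge0_integralZl P measurableT mind ni (leey 0)).
have PN0' : (P : {measure set T -> \bar R}) N = 0 := PN0.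
rewrite integral_indic // setIT PN0' mule0 adde0.
rewrite le_eqVlt; apply/orP; left; apply/eqP.
under eq_integral => om _ do rewrite /rho EFinM.
have n1 x : setT x -> 0 <= (k%:R^-1 * G x + 1)%:E.
  by move=> _; rewrite lee_fin addr_ge0 // mulr_ge0.
have mkG : measurable_fun setT (fun x => (k%:R^-1 * G x)%R).
  by apply: measurable_realfun.measurable_funM => //; exact: measurable_cst.
have m1 : measurable_fun setT (fun x => (k%:R^-1 * G x + 1)%:E).
  apply/measurable_EFinP; apply: measurable_realfun.measurable_funD => //.
have B20 : (0 <= 4 * B ^+ 2)%R by rewrite mulr_ge0 // sqr_ge0.
rewrite (ge0_integralZl_EFin P measurableT n1 m1 B20).
congr (_ * _); under eq_integral => om _ do rewrite EFinD.
have n2 x : setT x -> 0 <= (k%:R^-1 * G x)%:E by move=> _; rewrite lee_fin mulr_ge0.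
have m2 : measurable_fun setT (fun x => (k%:R^-1 * G x)%:E) by apply/measurable_EFinP.
have n3 x : setT x -> 0 <= (cst 1 : T -> \bar R) x by move=> _; rewrite /= lee01.
have m3 : measurable_fun setT (cst 1 : T -> \bar R) by exact: measurable_cst.
rewrite (ge0_integralD P measurableT n2 m2 n3 m3).
rewrite integral_cst // h1 mule1 hE; congr (_ + _).
under eq_integral => om _ do rewrite EFinM.
have n4 x : setT x -> 0 <= (G x)%:E by move=> _; rewrite lee_fin.
have m4 : measurable_fun setT (fun x => (G x)%:E) by apply/measurable_EFinP.
have k0' : (0 <= k%:R^-1 :> R)%R by rewrite invr_ge0.
by rewrite (ge0_integralZl_EFin P measurableT n4 m4 k0').
Qed.

End Meas.

Theorem lemma3 (R : realType) (d k : nat) (d0 : measure_display)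
  (T : measurableType d0) (P : probability T R)
  (X : T -> 'rV[R]_d) (Y : T -> R)
  (B eta : R) (q : 'I_d -> R) (w1 : 'rV[R]_d) :
  (forall i : 'I_d, measurable_fun setT (fun om => X om 0 i)) ->
  measurable_fun setT Y ->
  {ae P, forall om, norm2 (X om) <= 1 /\ `|Y om| <= B} ->
  0 < B -> 0 < eta ->
  (forall i, 0 <= q i) -> \sum_(i < d) q i = 1 ->
  (0 < k)%N ->
  w1 != 0 -> norm2 w1 <= B ->
  forall n : nat,
    (E_sq_g k P X Y B eta q w1 n <=
     (4 * B ^+ 2)%:E * ((k%:R^-1)%:E * E_sq_xr P X q + 1))%E.
Proof.
move=> mX mY hae B0 eta0 q0 q1 k0 w10 hw1 n.
rewrite /E_sq_g; apply: EW_bound => //.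
- apply: mule_ge0; first by rewrite lee_fin mulr_ge0 // sqr_ge0.
  apply: adde_ge0; last exact: lee01.
  apply: mule_ge0; first by rewrite lee_fin invr_ge0.
  apply: integral_ge0 => om _; apply: sume_ge0 => i _.
  by rewrite lee_fin mulr_ge0 // sqr_ge0.
- move=> w; apply: integral_ge0 => om _; apply: sume_ge0 => ii _.
  apply: sume_ge0 => j _; apply: mule_ge0; last by rewrite lee_fin sqr_ge0.
  by rewrite lee_fin mulr_ge0 // ?qprod_ge0 // pj_ge0.
- move=> w hw; exact: base.
Qed.
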